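(* Let $u$ be a parking sorted configuration on $K_{m,n}$ (with arbitrary value $u_{a_m}\in\mathbb Z$ at the sink). Then $$\mathrm{xpara}(u)=(m-1)(n-1)+\mathrm{rank}(u)-\mathrm{degree}(u)\qquad\text{and}\qquad \mathrm{ypara}(u)=\mathrm{rank}(u)+1.$$
   Context: Let $m,n\ge 1$. $K_{m,n}$ is the complete bipartite graph with vertex set $V=A_m\sqcup B_n$, $A_m=\{a_1,\dots,a_m\}$, $B_n=\{b_1,\dots,b_n\}$, with exactly one edge $\{a_i,b_j\}$ for every $i,j$; $a_m$ is the sink. A configuration is a function $u:V\to\mathbb Z$; $\mathrm{degree}(u)=\sum_c u_c$. For $c\in V$ with graph degree $d_c$, $\Delta^{(c)}=d_c e_c-\sum_{c'\text{ adjacent to }c}e_{c'}$, with $e_c$ the indicator configuration of $c$; $\Delta^{(C)}=\sum_{c\in C}\Delta^{(c)}$. Toppling equivalence: difference in the integer span of the $\Delta^{(c)}$. Effective: toppling equivalent to a non-negative configuration. $\mathrm{rank}(u)=-1+\min\{\mathrm{degree}(f): f\ge0,\ u-f\text{ not effective}\}$. $u$ is parking if $u_c\ge0$ for $c\ne a_m$ and for every non-empty $C\subseteq V\setminus\{a_m\}$, $u-\Delta^{(C)}$ has a negative value at a vertex other than $a_m$; sorted if $u_{a_1}\le\dots\le u_{a_{m-1}}$ and $u_{b_1}\le\dots\le u_{b_n}$. The $r$-vector of a parking sorted $u$ is $(r_1,\dots,r_n)$, $r_i=u_{b_i}+1-\#\{j\in\{1,\dots,m-1\}: u_{a_j}+1\le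 i-1\}$ (one has $-m+2\le r_i\le 1$). Labels: for $\sigma\in\mathbb Z$ write $\sigma=qn+t$ with $q,t\in\mathbb Z$, $0\le t<n$; call $\sigma$ right (for $u$) if $q+r_{t+1}\ge 1$ and left otherwise (in the paper, $\sigma$ labels a cell of the cylindric diagram, lying to the right resp. left of the red path). Define $\mathrm{xpara}(u)=\#\{\sigma\in\mathbb Z:\sigma>u_{a_m},\ \sigma\text{ left}\}$ (unvisited left cells) and $\mathrm{ypara}(u)=\#\{\sigma\in\mathbb Z:\sigma\le u_{a_m},\ \sigma\text{ right}\}$ (visited right cells); both are finite. *)

(* Defs.v *)
From HB Require Import structures.
From mathcomp Require Import all_boot all_order all_algebra.
From Stdlib Require Import ClassicalEpsilon.
Set Implicit Arguments. Unset Strict Implicit. Unset Printing Implicit Defensive.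
Import Order.TTheory GRing.Theory Num.Theory.
Local Open Scope ring_scope.

(* Vertices of K_{m,n}: inl i = a_{i+1} (i : 'I_m), inr j = b_{j+1} (j : 'I_n). *)
Definition V (m n : nat) : finType := ('I_m + 'I_n)%type.

Definition config (m n : nat) := V m n -> int.

Lemma sink_lt (m : nat) : (0 < m)%N -> (m.-1 < m)%N.
Proof. by rewrite ltn_predL. Qed.

Definition sink (m n : nat) (Hm : (0 < m)%N) : V m n := inl (Ordinal (sink_lt Hm)).

Definition is_sink (m n : nat) (c : V m n) : bool :=
  match c with inl i => (val i == m.-1)%N | inr _ => false end.

Definition adj (m n : nat) (c x : V m n) : bool :=
  match c, x with
  | inl _, inr _ => true
  | inr _, inl _ => true
  | _, _ => false
  end.

Definition gdeg (m n : nat) (c : V m n) : int :=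
  match c with inl _ => n%:Z | inr _ => m%:Z end.

Definition Delta (m n : nat) (c : V m n) : config m n :=
  fun x => (if x == c then gdeg c else 0) - (if adj c x then 1 else 0).

Definition DeltaSet (m n : nat) (C : {set V m n}) : config m n :=
  fun x => \sum_(c in C) Delta c x.

Definition degree (m n : nat) (u : config m n) : int := \sum_(c : V m n) u c.

Definition nonneg (m n : nat) (f : config m n) : Prop := forall x, 0 <= f x.

Definition topp_equiv (m n : nat) (u v : config m n) : Prop :=
  exists z : V m n -> int, forall x, u x - v x = \sum_(c : V m n) z c * Delta c x.

Definition effective (m n : nat) (u : config m n) : Prop :=
  exists f : config m n, nonneg f /\ topp_equiv u f.

Definition csub (m n : nat) (u f : config m n) : config m n := fun x => u x - f x.

Definition rank_spec (m n : nat) (u : config m n) (r : int) : Prop :=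
  (exists f : config m n, [/\ nonneg f, ~ effective (csub u f) & degree f = r + 1])
  /\ (forall f : config m n, nonneg f -> ~ effective (csub u f) -> r + 1 <= degree f).

Definition rank (m n : nat) (u : config m n) : int :=
  epsilon (inhabits 0) (rank_spec u).

Definition parking (m n : nat) (u : config m n) : Prop :=
  (forall c : V m n, ~~ is_sink c -> 0 <= u c) /\
  (forall C : {set V m n}, C != set0 -> (forall c, c \in C -> ~~ is_sink c) ->
     exists x : V m n, ~~ is_sink x /\ u x - DeltaSet C x < 0).

Definition sorted_conf (m n : nat) (u : config m n) : Prop :=
  (forall i j : 'I_m, (i <= j)%N -> (j < m.-1)%N -> u (inl i) <= u (inl j)) /\
  (forall i j : 'I_n, (i <= j)%N -> u (inr i) <= u (inr j)).

(* r-vector, 0-indexed: rvec u k = r_{k+1}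
   = u_{b_{k+1}} + 1 - #{ j in 1..m-1 : u_{a_j} + 1 <= k } (for k < n) *)
Definition rvec (m n : nat) (u : config m n) (k : nat) : int :=
  match @insub nat (fun k => (k < n)%N) 'I_n k with
  | Some j => u (inr j) + 1
              - (#|[pred i : 'I_m | (i < m.-1)%N && (u (inl i) + 1 <= k%:Z)]|)%:Z
  | None => 0
  end.

Definition is_right (m n : nat) (u : config m n) (sigma : int) : bool :=
  1 <= (sigma %/ n%:Z)%Z + rvec u `|(sigma %% n%:Z)%Z|%N.

Definition counts (P : int -> Prop) (N : int) : Prop :=
  exists s : seq int, [/\ uniq s, (forall x, x \in s <-> P x) & (size s)%:Z = N].

(* Main.v *)
Require Import Defs.
From HB Require Import structures.
From mathcomp Require Import all_boot all_order all_algebra zify ring lra.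
From Stdlib Require Import ClassicalEpsilon.
Set Implicit Arguments. Unset Strict Implicit. Unset Printing Implicit Defensive.
Import Order.TTheory GRing.Theory Num.Theory.
Local Open Scope ring_scope.

Lemma divz_le (x y d : int) : 0 < d -> x <= y -> (x %/ d)%Z <= (y %/ d)%Z.
Proof.
move=> d0 xy; rewrite lez_divRL //; apply: le_trans xy.
by apply: lez_floor; rewrite gt_eqF.
Qed.

Lemma divz_uniq (x q d : int) : 0 < d -> q * d <= x -> x < q * d + d -> (x %/ d)%Z = q.
Proof.
move=> d0 h1 h2.
have -> : x = q * d + (x - q * d) by ring.
rewrite divzMDl ?gt_eqF // divz_small ?addr0 //.
apply/andP; split; first by lia.
have : `|d|%N = d :> int by rewrite abszE gtr0_norm.
move=> ->; lia.
Qed.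

Lemma divz_lt (x z d : int) : 0 < d -> ((x %/ d)%Z < z) = (x < z * d).
Proof. by move=> d0; rewrite ltNge lez_divRL // -ltNge. Qed.

Lemma divz_addn (x k d : int) : d != 0 -> ((x + k * d) %/ d)%Z = (x %/ d)%Z + k.
Proof. by move=> d0; rewrite addrC divzMDl // addrC. Qed.

Lemma divz_bounds (x d : int) : 0 < d ->
  (x %/ d)%Z * d <= x /\ x < (x %/ d)%Z * d + d.
Proof.
move=> d0; split; first by apply: lez_floor; rewrite gt_eqF.
have -> : (x %/ d)%Z * d + d = ((x %/ d)%Z + 1) * d by ring.
by rewrite -divz_lt // ltzD1.
Qed.

Lemma divz_step (x d : int) : 0 < d ->
  (((x - 1) %/ d)%Z <= (x %/ d)%Z) /\ ((x %/ d)%Z <= ((x - 1) %/ d)%Z + 1).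
Proof.
move=> d0; split; first by apply: divz_le => //; lia.
have [h1 h2] := divz_bounds x d0.
have [h3 h4] := divz_bounds (x - 1) d0.
set q := (x %/ d)%Z in h1 h2 *; set p := ((x - 1) %/ d)%Z in h3 h4 *.
have : q * d < (p + 2) * d by nia.
rewrite ltr_pM2r //; lia.
Qed.

Lemma divz_jump (x d : int) : 0 < d ->
  ((x - 1) %/ d)%Z < (x %/ d)%Z -> x = (x %/ d)%Z * d.
Proof.
move=> d0 hj.
have [h1 h2] := divz_bounds x d0.
have [h3 h4] := divz_bounds (x - 1) d0.
set q := (x %/ d)%Z in hj h1 h2 *; set p := ((x - 1) %/ d)%Z in hj h3 h4 *.
have : (p + 1) * d <= q * d by rewrite ler_pM2r //; lia.
nia.
Qed.

Lemma aux_q (q a wv Y n : int) : 0 < n -> Y <= n -> q * n <= wv + Y -> wv <= a -> 0 <= a -> q <= a + n.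
Proof. move=> *; nia. Qed.

Lemma aux_same (a b q1 q2 w n : int) : 0 < n -> 1 <= a <= n -> 1 <= b <= n ->
  w + a = q1 * n -> w + b = q2 * n -> a = b.
Proof.
move=> hn /andP[a1 a2] /andP[b1 b2] e1 e2.
have e : a - b = (q1 - q2) * n by rewrite mulrBl -e1 -e2; ring.
case: (ltrgtP q1 q2) => hq.
- have : (q1 - q2) * n <= (-1) * n by rewrite ler_pM2r //; lia.
  lia.
- have : 1 * n <= (q1 - q2) * n by rewrite ler_pM2r //; lia.
  lia.
- by move: e; rewrite hq subrr mul0r; lia.
Qed.

Lemma aux_sep (x1 x2 q1 q2 w m : int) : 0 < m ->
  w + x1 = q1 * m -> w + x2 = q2 * m -> [\/ x1 = x2, x2 + m <= x1 | x1 + m <= x2].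
Proof.
move=> hm e1 e2.
have e : x1 - x2 = (q1 - q2) * m by rewrite mulrBl -e1 -e2; ring.
case: (ltrgtP q1 q2) => hq.
- have : (q1 - q2) * m <= (-1) * m by rewrite ler_pM2r //; lia.
  move=> h; apply: Or33; lia.
- have : 1 * m <= (q1 - q2) * m by rewrite ler_pM2r //; lia.
  move=> h; apply: Or32; lia.
- by apply: Or31; move: e; rewrite hq subrr mul0r; lia.
Qed.

Lemma count_split (T : Type) (P Q : pred T) (s : seq T) :
  count P s = (count (fun x => P x && Q x) s + count (fun x => P x && ~~ Q x) s)%N.
Proof. by elim: s => //= x s ->; case: (P x); case: (Q x) => /=; rewrite ?addnS ?addSn. Qed.

Lemma count_le1 (T : eqType) (P : pred T) (s : seq T) :
  uniq s -> (forall x y, P x -> P y -> x = y) -> (count P s <= 1)%N.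
Proof.
elim: s => //= x s IH /andP[xs us] h.
case Px: (P x) => /=; last by rewrite add0n IH.
suff -> : count P s = 0%N by [].
apply/eqP; rewrite -leqn0 leqNgt -has_count; apply/hasP => -[y ys Py].
by move: xs; rewrite (h x y Px Py) ys.
Qed.

Lemma aux_eq (x f d : int) : d <= 1 -> f - d < x -> x <= f -> x = f.
Proof. move=> *; lia. Qed.

Section Eff.
Variables (m n : nat).
Hypotheses (Hm : (0 < m)%N) (Hn : (0 < n)%N).

Lemma sumV (F : V m n -> int) :
  \sum_(c : V m n) F c = \sum_(i < m) F (inl i) + \sum_(j < n) F (inr j).
Proof. by rewrite big_sumType. Qed.

Lemma sumDelta_l (z : V m n -> int) (i : 'I_m) :
  \sum_(c : V m n) z c * Delta c (inl i) = z (inl i) * n%:Z - \sum_(j < n) z (inr j).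
Proof.
rewrite sumV /Delta /=.
rewrite (bigD1 i) //= eqxx big1 => [|i' hi']; last first.
  by rewrite (_ : (inl i == inl i' :> V m n) = false) ?mulr0 ?subr0 //; apply/eqP => -[/eqP]; rewrite eq_sym (negbTE hi').
rewrite addr0 subr0 -sumrN; congr (_ + _); apply: eq_bigr => j _.
by rewrite sub0r mulrN1.
Qed.

Lemma sumDelta_r (z : V m n -> int) (j : 'I_n) :
  \sum_(c : V m n) z c * Delta c (inr j) = z (inr j) * m%:Z - \sum_(i < m) z (inl i).
Proof.
rewrite sumV /Delta /= addrC.
rewrite (bigD1 j) //= eqxx big1 => [|j' hj']; last first.
  by rewrite (_ : (inr j == inr j' :> V m n) = false) ?mulr0 ?subr0 //; apply/eqP => -[/eqP]; rewrite eq_sym (negbTE hj').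
rewrite addr0 subr0 -sumrN; congr (_ + _); apply: eq_bigr => i _.
by rewrite sub0r mulrN1.
Qed.


Definition Fa (w : config m n) (Y : int) : int := \sum_(i < m) ((w (inl i) + Y) %/ n%:Z)%Z.
Definition Gb (w : config m n) (X : int) : int := \sum_(j < n) ((w (inr j) + X) %/ m%:Z)%Z.

Lemma n_pos : (0 : int) < n%:Z. Proof. by rewrite ltz_nat. Qed.
Lemma m_pos : (0 : int) < m%:Z. Proof. by rewrite ltz_nat. Qed.

Lemma sum_if_eq (T : finType) (i0 : T) (a : int) :
  \sum_(i : T) (if i == i0 then a else 0) = a.
Proof.
rewrite (bigD1 i0) //= eqxx big1 ?addr0 // => i /negbTE -> //.
Qed.

Lemma eff_point (w : config m n) :
  effective w -> exists X Y, X <= Fa w Y /\ Y <= Gb w X.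
Proof.
move=> [f [fnn [z hz]]].
exists (\sum_(i < m) z (inl i)), (\sum_(j < n) z (inr j)); split.
  apply: ler_sum => i _; rewrite lez_divRL ?n_pos //.
  have := hz (inl i); rewrite sumDelta_l => h.
  have := fnn (inl i). move: h. set S := \sum_(j < n) _. move=> h h2. lra.
apply: ler_sum => j _; rewrite lez_divRL ?m_pos //.
have := hz (inr j); rewrite sumDelta_r => h.
have := fnn (inr j); lra.
Qed.

Lemma point_eff (w : config m n) X Y :
  X <= Fa w Y -> Y <= Gb w X -> effective w.
Proof.
move=> hX hY.
pose i0 : 'I_m := Ordinal Hm. pose j0 : 'I_n := Ordinal Hn.
pose z : V m n -> int := fun c => match c with
  | inl i => ((w (inl i) + Y) %/ n%:Z)%Z - (if i == i0 then Fa w Y - X else 0)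
  | inr j => ((w (inr j) + X) %/ m%:Z)%Z - (if j == j0 then Gb w X - Y else 0) end.
have sa : \sum_(i < m) z (inl i) = X.
  rewrite /z sumrB sum_if_eq /Fa; ring.
have sb : \sum_(j < n) z (inr j) = Y.
  rewrite /z sumrB sum_if_eq /Gb; ring.
exists (fun x => w x - \sum_(c : V m n) z c * Delta c x); split; last first.
  by exists z => x; ring.
case=> [i|j].
  rewrite sumDelta_l sb.
  have h1 : z (inl i) <= ((w (inl i) + Y) %/ n%:Z)%Z.
    rewrite /z; case: (i == i0); lia.
  have h2 := lez_floor (w (inl i) + Y) (lt0r_neq0 n_pos).
  have h3 : z (inl i) * n%:Z <= ((w (inl i) + Y) %/ n%:Z)%Z * n%:Z.
    by rewrite ler_pM2r ?n_pos.
  lra.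
rewrite sumDelta_r sa.
have h1 : z (inr j) <= ((w (inr j) + X) %/ m%:Z)%Z.
  rewrite /z; case: (j == j0); lia.
have h2 := lez_floor (w (inr j) + X) (lt0r_neq0 m_pos).
have h3 : z (inr j) * m%:Z <= ((w (inr j) + X) %/ m%:Z)%Z * m%:Z.
  by rewrite ler_pM2r ?m_pos.
lra.
Qed.


Lemma Fa_per (w : config m n) Y k : Fa w (Y + k * n%:Z) = Fa w Y + k * m%:Z.
Proof.
rewrite /Fa.
under eq_bigr => i _ do rewrite addrA divz_addn ?(lt0r_neq0 n_pos) //.
by rewrite big_split /= sumr_const card_ord -[m%:Z]natz mulr_natr.
Qed.

Lemma Gb_per (w : config m n) X k : Gb w (X + k * m%:Z) = Gb w X + k * n%:Z.
Proof.
rewrite /Gb.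
under eq_bigr => i _ do rewrite addrA divz_addn ?(lt0r_neq0 m_pos) //.
by rewrite big_split /= sumr_const card_ord -[n%:Z]natz mulr_natr.
Qed.

Lemma Fa_le (w : config m n) Y Y' : Y <= Y' -> Fa w Y <= Fa w Y'.
Proof. move=> h; apply: ler_sum => i _; apply: divz_le; [exact: n_pos|lra]. Qed.

Lemma Gb_le (w : config m n) X X' : X <= X' -> Gb w X <= Gb w X'.
Proof. move=> h; apply: ler_sum => i _; apply: divz_le; [exact: m_pos|lra]. Qed.

Definition inR (w : config m n) (p : int * int) : bool :=
  [&& (1 <= p.2), (p.2 <= n%:Z), (p.1 <= Fa w p.2) & (p.2 <= Gb w p.1)].

Lemma to_window (w : config m n) X Y : X <= Fa w Y -> Y <= Gb w X ->
  exists k, inR w (X + k * m%:Z, Y + k * n%:Z).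
Proof.
move=> hX hY.
exists (- ((Y - 1) %/ n%:Z)%Z).
have [h1 h2] := divz_bounds (Y - 1) n_pos.
rewrite /inR /= Fa_per Gb_per; apply/and4P; split. all: try lra. all: lia.
Qed.

Definition BnZ (w : config m n) : int := \sum_(c : V m n) `|w c| + (m * n)%:Z.

Lemma le_sum_one (T : finType) (F : T -> int) c0 :
  (forall c, 0 <= F c) -> F c0 <= \sum_c F c.
Proof.
move=> h; rewrite (bigD1 c0) //= lerDl; apply: sumr_ge0 => c _; exact: h.
Qed.

Lemma inR_bound (w : config m n) p : inR w p -> - BnZ w <= p.1 <= BnZ w.
Proof.
case: p => X Y /and4P [/= y1 yn hX hY] /=.
have hs0 : 0 <= \sum_(c : V m n) `|w c| by apply: sumr_ge0 => c _.
apply/andP; split.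
  have : - \sum_(c : V m n) `|w c| <= X; last by rewrite /BnZ; have hmn : (0:int) <= (m*n)%:Z by []; lra.
  rewrite lerNl; rewrite leNgt; apply/negP => hlt.
  have : Gb w X <= 0.
    rewrite /Gb; apply: sumr_le0 => j _.
    have hj := @le_sum_one (V m n) (fun c => (`|w c| : int)) (inr j) (fun c => normr_ge0 _).
    have hw : w (inr j) <= `|w (inr j)| by apply: ler_norm.
    suff : ((w (inr j) + X) %/ m%:Z)%Z < 1 by lia.
    rewrite divz_lt ?m_pos // mul1r; have := m_pos; simpl in *; lra.
  lra.
have hA : \sum_(i < m) `|w (inl i)| <= \sum_(c : V m n) `|w c|.
  rewrite sumV lerDl; apply: sumr_ge0 => j _ //.
apply: (le_trans hX); rewrite /Fa /BnZ.
have -> : (m * n)%:Z = \sum_(i < m) n%:Z by rewrite sumr_const card_ord PoszM mulrC -[m%:Z]natz mulr_natr.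
apply: (le_trans _ (lerD hA (lexx _))); rewrite -big_split /=.
apply: ler_sum => i _.
have hw : w (inl i) <= `|w (inl i)| by apply: ler_norm.
have [h1 h2] := divz_bounds (w (inl i) + Y) n_pos.
set q := ((w (inl i) + Y) %/ n%:Z)%Z in h1 h2 *.
have hn := n_pos.
exact: (aux_q hn yn h1 hw (normr_ge0 _)).
Qed.


Definition box (K : nat) : seq (int * int) :=
  [seq (x%:Z - K%:Z, n%:Z - t%:Z) | t <- iota 0 n, x <- iota 0 (2 * K).+1].

Lemma in_box K (X Y : int) : - K%:Z <= X <= K%:Z -> 1 <= Y <= n%:Z -> (X, Y) \in box K.
Proof.
move=> /andP[x1 x2] /andP[y1 y2].
apply/allpairsP; exists (absz (n%:Z - Y), absz (X + K%:Z)); split.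
- rewrite mem_iota add0n /=; lia.
- rewrite mem_iota add0n /=; lia.
- rewrite /=; congr pair; lia.
Qed.

Lemma box_uniq K : uniq (box K).
Proof.
apply: allpairs_uniq; rewrite ?iota_uniq //.
move=> [t x] [t' x'] _ _ /= [e1 e2]; congr pair; lia.
Qed.

Definition Acnt (K : nat) (w : config m n) : nat := count (inR w) (box K).

Definition dec (w : config m n) (c : V m n) : config m n :=
  fun x => w x - (if x == c then 1 else 0).

Lemma Fa_dec_l w i0 Y : Fa (dec w (inl i0)) Y =
  Fa w Y - (((w (inl i0) + Y) %/ n%:Z)%Z - ((w (inl i0) + Y - 1) %/ n%:Z)%Z).
Proof.
rewrite /Fa (bigD1 i0) // [X in _ = X - _](bigD1 i0) //= /dec eqxx.
rewrite (eq_bigr (fun i => ((w (inl i) + Y) %/ n%:Z)%Z)); last first.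
  by move=> i hi; rewrite (_ : (inl i == inl i0 :> V m n) = false) ?subr0 //; apply/eqP => -[] /eqP; rewrite (negbTE hi).
rewrite (addrAC (w (inl i0))); ring.
Qed.

Lemma Gb_dec_l w i0 X : Gb (dec w (inl i0)) X = Gb w X.
Proof. by apply: eq_bigr => j _; rewrite /dec subr0. Qed.

Lemma Fa_dec_r w j0 Y : Fa (dec w (inr j0)) Y = Fa w Y.
Proof. by apply: eq_bigr => j _; rewrite /dec subr0. Qed.

Lemma Gb_dec_r w j0 X : Gb (dec w (inr j0)) X =
  Gb w X - (((w (inr j0) + X) %/ m%:Z)%Z - ((w (inr j0) + X - 1) %/ m%:Z)%Z).
Proof.
rewrite /Gb (bigD1 j0) // [X in _ = X - _](bigD1 j0) //= /dec eqxx.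
rewrite (eq_bigr (fun j => ((w (inr j) + X) %/ m%:Z)%Z)); last first.
  by move=> j hj; rewrite (_ : (inr j == inr j0 :> V m n) = false) ?subr0 //; apply/eqP => -[] /eqP; rewrite (negbTE hj).
rewrite (addrAC (w (inr j0))); ring.
Qed.

Lemma inR_dec w c p : inR (dec w c) p -> inR w p.
Proof.
case: p => X Y; rewrite /inR /= => /and4P[h1 h2 h3 h4].
case: c h3 h4 => [i0|j0]; rewrite ?Fa_dec_l ?Gb_dec_l ?Fa_dec_r ?Gb_dec_r => h3 h4;
  rewrite h1 h2 /=; apply/andP; split => //.
- have [s1 s2] := divz_step (w (inl i0) + Y) n_pos; lra.
- have [s1 s2] := divz_step (w (inr j0) + X) m_pos; lra.
Qed.

Lemma lost_uniq w c p q :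
  inR w p && ~~ inR (dec w c) p -> inR w q && ~~ inR (dec w c) q -> p = q.
Proof.
case: p => X1 Y1; case: q => X2 Y2; rewrite /inR /=.
case: c => [i0|j0].
  rewrite !Fa_dec_l !Gb_dec_l.
  move=> /andP[/and4P[a1 a2 a3 a4] b] /andP[/and4P[c1 c2 c3 c4] d].
  have [s1 s2] := divz_step (w (inl i0) + Y1) n_pos.
  have [t1 t2] := divz_step (w (inl i0) + Y2) n_pos.
  have j1 : ((w (inl i0) + Y1 - 1) %/ n%:Z)%Z < ((w (inl i0) + Y1) %/ n%:Z)%Z.
    move: b; rewrite a1 a2 a4 /=; lra.
  have j2 : ((w (inl i0) + Y2 - 1) %/ n%:Z)%Z < ((w (inl i0) + Y2) %/ n%:Z)%Z.
    move: d; rewrite c1 c2 c4 /=; lra.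
  have e1 := divz_jump n_pos j1. have e2 := divz_jump n_pos j2.
  have eY : Y1 = Y2.
    apply: (aux_same n_pos _ _ e1 e2); apply/andP; split => //.
  subst Y2.
  have hX1 : X1 = Fa w Y1 by move: b; rewrite a1 a2 a4 /= ?andbT -ltNge => b; apply: (aux_eq _ b a3); lra.
  have hX2 : X2 = Fa w Y1 by move: d; rewrite c1 c2 c4 /= ?andbT -ltNge => d; apply: (aux_eq _ d c3); lra.
  by rewrite hX1 hX2.
rewrite !Fa_dec_r !Gb_dec_r.
move=> /andP[/and4P[a1 a2 a3 a4] b] /andP[/and4P[c1 c2 c3 c4] d].
have [s1 s2] := divz_step (w (inr j0) + X1) m_pos.
have [t1 t2] := divz_step (w (inr j0) + X2) m_pos.
have j1 : ((w (inr j0) + X1 - 1) %/ m%:Z)%Z < ((w (inr j0) + X1) %/ m%:Z)%Z.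
  move: b; rewrite a1 a2 a3 /=; lra.
have j2 : ((w (inr j0) + X2 - 1) %/ m%:Z)%Z < ((w (inr j0) + X2) %/ m%:Z)%Z.
  move: d; rewrite c1 c2 c3 /=; lra.
have e1 := divz_jump m_pos j1. have e2 := divz_jump m_pos j2.
have hY1 : Y1 = Gb w X1 by move: b; rewrite a1 a2 a3 /= ?andbT -ltNge => b; apply: (aux_eq _ b a4); lra.
have hY2 : Y2 = Gb w X2 by move: d; rewrite c1 c2 c3 /= ?andbT -ltNge => d; apply: (aux_eq _ d c4); lra.
case: (aux_sep m_pos e1 e2) => [eX|h|h].
- by subst X2; rewrite hY1 hY2.
- have := Gb_per w X2 1; rewrite !mul1r => hp; have := Gb_le w h; rewrite hp => hh; clear b d; exfalso; lra.
- have := Gb_per w X1 1; rewrite !mul1r => hp; have := Gb_le w h; rewrite hp => hh; clear b d; exfalso; lra.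
Qed.

Lemma Acnt_dec K w c :
  (Acnt K (dec w c) <= Acnt K w <= (Acnt K (dec w c)).+1)%N.
Proof.
rewrite /Acnt (count_split (inR w) (inR (dec w c))).
have -> : count (fun x => inR w x && inR (dec w c) x) (box K) = count (inR (dec w c)) (box K).
  apply: eq_count => p; case h: (inR (dec w c) p); rewrite ?andbF ?andbT //.
  exact: inR_dec h.
rewrite leq_addr /= -addn1 leq_add2l.
apply: count_le1; first exact: box_uniq.
move=> p q; exact: lost_uniq.
Qed.


Lemma Acnt_pos_eff K w : (0 < Acnt K w)%N -> effective w.
Proof.
rewrite /Acnt -has_count => /hasP [[X Y] _ /and4P[_ _ h3 h4]].
exact: point_eff h3 h4.
Qed.

Lemma inR_in_box K w p : BnZ w <= K%:Z -> inR w p -> p \in box K.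
Proof.
move=> hK hp; have /andP[b1 b2] := inR_bound hp.
case: p hp b1 b2 => X Y /and4P[y1 y2 _ _] /= b1 b2.
apply: in_box; apply/andP; split => //; lra.
Qed.

Lemma eff_Acnt K w : BnZ w <= K%:Z -> effective w -> (0 < Acnt K w)%N.
Proof.
move=> hK /eff_point [X [Y [hX hY]]].
have [k hk] := to_window hX hY.
rewrite /Acnt -has_count; apply/hasP; exists (X + k * m%:Z, Y + k * n%:Z) => //.
exact: inR_in_box hk.
Qed.

Lemma jump_shift (a k : int) :
  ((a + k * n%:Z) %/ n%:Z)%Z - ((a + k * n%:Z - 1) %/ n%:Z)%Z = (a %/ n%:Z)%Z - ((a - 1) %/ n%:Z)%Z.
Proof.
rewrite divz_addn ?(lt0r_neq0 n_pos) // (addrAC a) divz_addn ?(lt0r_neq0 n_pos) //; ring.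
Qed.

Lemma greedy K w : BnZ w <= K%:Z -> (0 < Acnt K w)%N ->
  exists i0, Acnt K w = (Acnt K (dec w (inl i0))).+1.
Proof.
move=> hK hpos.
have [[X Y] _ /and4P[y1 y2 hX hY]] : exists2 p, p \in box K & inR w p.
  by apply/hasP; rewrite has_count.
have ex : exists d : nat, Fa w (Y - d%:Z) < Fa w Y.
  exists n; have := Fa_per w Y (-1); rewrite !mulN1r => ->.
  have := m_pos; lra.
case: (ex_minnP ex) => d0 hd0 hmin.
case: d0 hd0 hmin => [|d1] hd0 hmin; first by move: hd0; rewrite subr0 ltxx.
set Y' := Y - d1%:Z.
have hY'Y : Y' <= Y by rewrite /Y'; have : (0:int) <= d1%:Z by []; lra.
have eF : Fa w Y' = Fa w Y.
  apply/eqP; rewrite eq_le Fa_le // leNgt; apply/negP => h.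
  by have := hmin d1 h; rewrite ltnn.
have jmp : Fa w (Y' - 1) < Fa w Y'.
  by rewrite eF /Y' -addrA -opprD (_ : d1%:Z + 1 = d1.+1%:Z) // -addn1 PoszD.
have [i0 hi0] : exists i0, ((w (inl i0) + Y' - 1) %/ n%:Z)%Z < ((w (inl i0) + Y') %/ n%:Z)%Z.
  case: (pickP (fun i => ((w (inl i) + Y' - 1) %/ n%:Z)%Z < ((w (inl i) + Y') %/ n%:Z)%Z)).
    by move=> i hi; exists i.
  move=> hnone; exfalso; move: jmp; apply/negP; rewrite -leNgt.
  apply: ler_sum => i _; have := negbT (hnone i); rewrite -leNgt => h; apply: (le_trans h); apply: divz_le; [exact: n_pos| rewrite /Y'; lra].
exists i0.
set k := - ((Y' - 1) %/ n%:Z)%Z.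
set p := (Fa w Y' + k * m%:Z, Y' + k * n%:Z).
have hp : inR w p.
  have [h1 h2] := divz_bounds (Y' - 1) n_pos.
  rewrite /inR /p /= Fa_per Gb_per; apply/and4P; split; first (rewrite /k; lia); first (rewrite /k; lia); first lra.
  have : Y <= Gb w (Fa w Y') by apply: (le_trans hY); apply: Gb_le; rewrite eF.
  lra.
have hl : inR w p && ~~ inR (dec w (inl i0)) p.
  rewrite hp /= /inR /p /= Fa_dec_l Fa_per addrA jump_shift.
  apply/negP => /and4P[_ _ h _]; lra.
rewrite /Acnt (count_split (inR w) (inR (dec w (inl i0)))).
have -> : count (fun x => inR w x && inR (dec w (inl i0)) x) (box K) = count (inR (dec w (inl i0))) (box K).
  apply: eq_count => q; case h: (inR (dec w (inl i0)) q); rewrite ?andbF ?andbT //.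
  exact: inR_dec h.
rewrite -addn1; congr addn; apply/eqP; rewrite eqn_leq; apply/andP; split.
  apply: count_le1; first exact: box_uniq.
  move=> q1 q2; exact: lost_uniq.
rewrite -has_count; apply/hasP; exists p => //.
exact: inR_in_box hK hp.
Qed.


Lemma Acnt_ext K w w' : (forall x, w x = w' x) -> Acnt K w = Acnt K w'.
Proof.
move=> e; apply: eq_count => -[X Y].
have eF : forall Y, Fa w Y = Fa w' Y by move=> Y'; apply: eq_bigr => i _; rewrite e.
have eG : forall X, Gb w X = Gb w' X by move=> X'; apply: eq_bigr => i _; rewrite e.
by rewrite /inR /= eF eG.
Qed.

Lemma nonneg_deg (f : config m n) : nonneg f -> 0 <= degree f.
Proof. by move=> h; apply: sumr_ge0 => c _. Qed.

Lemma peel (u : config m n) K (d : nat) : forall f : config m n, nonneg f -> degree f = d%:Z ->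
  (Acnt K u <= Acnt K (csub u f) + d)%N.
Proof.
elim: d => [|d IH] f fnn fd.
  have f0 : forall c, f c = 0.
    move=> c; apply/eqP; move: fd; rewrite /degree => /eqP; rewrite psumr_eq0 //.
    by move=> /allP /(_ c (mem_index_enum c)) /implyP /(_ isT).
  by rewrite addn0 (@Acnt_ext K (csub u f) u) // => x; rewrite /csub f0 subr0.
have [c hc] : exists c, 0 < f c.
  case: (pickP (fun c => 0 < f c)) => [c hc|hall]; first by exists c.
  have : degree f <= 0.
    by apply: sumr_le0 => c _; have := negbT (hall c); rewrite -leNgt.
  by rewrite fd.
pose f' : config m n := fun x => f x - (if x == c then 1 else 0).
have f'nn : nonneg f'.
  move=> x; rewrite /f'; case: eqP => [->|_]; last by rewrite subr0.
  have := hc; lia.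
have f'd : degree f' = d%:Z.
  rewrite /degree /f' sumrB sum_if_eq -/(degree f) fd -addn1 PoszD; ring.
have := IH f' f'nn f'd.
have e : Acnt K (csub u f) = Acnt K (dec (csub u f') c).
  by apply: Acnt_ext => x; rewrite /csub /dec /f'; ring.
have /andP[_ h2] := Acnt_dec K (csub u f') c.
rewrite e; move: h2; lia.
Qed.

Lemma BnZ_csub (u f : config m n) : nonneg f -> BnZ (csub u f) <= BnZ u + degree f.
Proof.
move=> fnn; rewrite /BnZ /degree.
suff : \sum_c `|csub u f c| <= \sum_c `|u c| + \sum_c f c by lra.
rewrite -big_split; apply: ler_sum => c _ /=.
by rewrite /csub (le_trans (ler_normB _ _)) // (ger0_norm (fnn c)).
Qed.

Lemma build (u : config m n) K (N : nat) : BnZ u + N%:Z <= K%:Z -> Acnt K u = N ->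
  forall k : nat, (k <= N)%N -> exists f : config m n,
    [/\ nonneg f, degree f = k%:Z & Acnt K (csub u f) = (N - k)%N].
Proof.
move=> hK hN; elim => [|k IH] hk.
  exists (fun _ => 0); split => //; first by rewrite /degree big1.
  by rewrite subn0 -hN; apply: Acnt_ext => x; rewrite /csub subr0.
have [f [fnn fd fA]] := IH (ltnW hk).
have hB : BnZ (csub u f) <= K%:Z.
  apply: (le_trans (BnZ_csub u fnn)); rewrite fd; apply: le_trans hK.
  rewrite lerD2l lez_nat; exact: ltnW.
have hpos : (0 < Acnt K (csub u f))%N by rewrite fA subn_gt0.
have [i0 hi0] := greedy hB hpos.
exists (fun x => f x + (if x == inl i0 then 1 else 0)); split.
- move=> x; have := fnn x; case: (x == inl i0); lia.
- by rewrite /degree big_split sum_if_eq /= -/(degree f) fd -addn1 PoszD.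
- have -> : Acnt K (csub u (fun x => f x + (if x == inl i0 then 1 else 0))) =
            Acnt K (dec (csub u f) (inl i0)).
    by apply: Acnt_ext => x; rewrite /csub /dec; ring.
  move: hi0; rewrite fA; lia.
Qed.

Lemma rank_val (u : config m n) (N K : nat) : BnZ u + N%:Z <= K%:Z -> Acnt K u = N ->
  rank u = N%:Z - 1.
Proof.
move=> hK hN.
have lower : forall f : config m n, nonneg f -> ~ effective (csub u f) -> N%:Z <= degree f.
  move=> f fnn hne.
  have hd := nonneg_deg fnn.
  have := peel u K fnn (esym (gez0_abs hd)).
  have -> : Acnt K (csub u f) = 0%N.
    apply/eqP; rewrite -leqn0 leqNgt; apply/negP => h; exact: hne (Acnt_pos_eff h).
  rewrite hN add0n => h; rewrite -(gez0_abs hd) lez_nat //.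
have [f [fnn fd fA]] := build hK hN (leqnn N).
have upper : rank_spec u (N%:Z - 1).
  split.
    exists f; split => //; last by rewrite fd; ring.
    move=> he.
    have hB : BnZ (csub u f) <= K%:Z.
      apply: (le_trans (BnZ_csub u fnn)); rewrite fd //.
    by move: (eff_Acnt hB he); rewrite fA subnn.
  move=> g gnn hg; have := lower g gnn hg; lra.
have hr : rank_spec u (rank u) by apply: epsilon_spec; exists (N%:Z - 1).
case: hr => [[g [gnn hg gd]] hall].
case: upper => [[g' [g'nn hg' g'd]] hall'].
have := hall' g gnn hg; have := hall g' g'nn hg'; lra.
Qed.

End Eff.

Lemma count_range (a b N : nat) : (a <= b)%N -> (b <= N)%N ->
  count (fun x => (a <= x)%N && (x < b)%N) (iota 0 N) = (b - a)%N.
Proof.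
move=> hab hbN.
have -> : N = (a + (b - a) + (N - b))%N by lia.
rewrite !iotaD !count_cat add0n.
rewrite (eq_in_count (a1 := fun x => (a <= x)%N && (x < b)%N) (a2 := pred0)); last first.
  by move=> x; rewrite mem_iota /= => h; apply/negbTE; lia.
rewrite (eq_in_count (a1 := fun x => (a <= x)%N && (x < b)%N) (a2 := predT) (s := iota a (b - a))); last first.
  by move=> x; rewrite mem_iota /= => h; lia.
rewrite (eq_in_count (a1 := fun x => (a <= x)%N && (x < b)%N) (a2 := pred0) (s := iota (a + (b - a)) _)); last first.
  by move=> x; rewrite mem_iota /= => h; apply/negbTE; lia.
by rewrite !count_pred0 count_predT size_iota addn0 add0n.
Qed.

Lemma sum_ind_ge (t n : nat) : (t <= n)%N ->
  \sum_(j < n) (if (t <= j)%N then 1 else 0 : int) = (n - t)%:Z.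
Proof.
move=> htn.
rewrite -(big_mkord xpredT (fun j => if (t <= j)%N then 1 else 0 : int)).
rewrite (big_cat_nat (leq0n t) htn) /=.
rewrite big_nat_cond big1 ?add0r; last first.
  by move=> j /andP[/andP[_ h] _]; rewrite leqNgt h.
rewrite big_nat_cond (eq_bigr (fun _ => 1)); last first.
  by move=> j /andP[/andP[h _] _]; rewrite h.
by rewrite -big_nat_cond sumr_const_nat -natz.
Qed.


Definition irange (a b : int) : seq int :=
  [seq a + k%:Z | k <- iota 0 (absz (Num.max 0 (b - a + 1)))].

Lemma max0E (c : int) : Num.max 0 c = if 0 <= c then c else 0.
Proof. by case: (lerP 0 c). Qed.

Lemma mem_irange a b x : (x \in irange a b) = (a <= x <= b).
Proof.
apply/mapP/idP.
  move=> [k]; rewrite mem_iota add0n max0E => hk ->.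
  case: ifP hk => h hk; last by move: hk; rewrite ltn0.
  lia.
move=> /andP[h1 h2]; exists (absz (x - a)); last by lia.
rewrite mem_iota add0n max0E; case: ifP => h; lia.
Qed.

Lemma irange_uniq a b : uniq (irange a b).
Proof.
rewrite map_inj_uniq ?iota_uniq // => k1 k2 /= e; lia.
Qed.

Lemma size_irange a b : size (irange a b) = absz (Num.max 0 (b - a + 1)).
Proof. by rewrite size_map size_iota. Qed.


Lemma sum_ind_le (s n : nat) : (s < n)%N ->
  \sum_(t < n) (if (t <= s)%N then 1 else 0 : int) = (s.+1)%:Z.
Proof.
move=> hs.
have e := sum_ind_ge hs.
rewrite (eq_bigr (fun t : 'I_n => 1 - (if (s.+1 <= t)%N then 1 else 0 : int))); last first.
  by move=> t _; rewrite ltnNge; case: (t <= s)%N; rewrite /= ?subr0 ?subrr.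
rewrite sumrB e sumr_const card_ord -natz; lia.
Qed.

Lemma hermite (n : nat) (S : int) : (0 < n)%N ->
  \sum_(t < n) ((S - t%:Z) %/ n%:Z)%Z = S - n%:Z + 1.
Proof.
move=> hn.
have np : (0:int) < n%:Z by rewrite ltz_nat.
set q := (S %/ n%:Z)%Z.
have hs0 := modz_ge0 S (lt0r_neq0 np).
have hs1 := ltz_mod S (lt0r_neq0 np).
set s := absz (S %% n%:Z)%Z.
have es : (S %% n%:Z)%Z = s%:Z by rewrite /s gez0_abs.
have eS : S = q * n%:Z + s%:Z by rewrite -es /q -divz_eq.
have sn : (s < n)%N by move: hs1; rewrite es /= ltz_nat.
rewrite (eq_bigr (fun t : 'I_n => q - 1 + (if (t <= s)%N then 1 else 0))); last first.
  move=> t _; have ht := ltn_ord t.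
  apply: divz_uniq => //; case: leqP => h; rewrite eS; nia.
rewrite big_split /= sum_ind_le // sumr_const card_ord -mulr_natr natz [in RHS]eS -addn1 PoszD.
ring.
Qed.


Lemma divmod_nt (n : nat) (q : int) (t : nat) : (0 < n)%N -> (t < n)%N ->
  ((q * n%:Z + t%:Z) %/ n%:Z)%Z = q /\ absz ((q * n%:Z + t%:Z) %% n%:Z)%Z = t.
Proof.
move=> hn ht.
have np : (0:int) < n%:Z by rewrite ltz_nat.
have hd : ((q * n%:Z + t%:Z) %/ n%:Z)%Z = q.
  by apply: divz_uniq => //; lia.
split => //.
have e := divz_eq (q * n%:Z + t%:Z) n%:Z.
rewrite hd in e.
have -> : ((q * n%:Z + t%:Z) %% n%:Z)%Z = t%:Z by lra.
by [].
Qed.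

Lemma decomp (n : nat) (x : int) : (0 < n)%N ->
  x = (x %/ n%:Z)%Z * n%:Z + (absz (x %% n%:Z)%Z)%:Z /\ (absz (x %% n%:Z)%Z < n)%N.
Proof.
move=> hn.
have np : (0:int) < n%:Z by rewrite ltz_nat.
have hs0 := modz_ge0 x (lt0r_neq0 np).
have hs1 := ltz_mod x (lt0r_neq0 np).
rewrite gez0_abs //; split; first exact: divz_eq.
by move: hs1; rewrite -ltz_nat gez0_abs.
Qed.

Lemma counts_cols (n : nat) (lo hi : nat -> int) (P : int -> Prop) : (0 < n)%N ->
  (forall x, P x <-> (lo (absz (x %% n%:Z)%Z) <= (x %/ n%:Z)%Z <= hi (absz (x %% n%:Z)%Z))) ->
  counts P (sumn [seq absz (Num.max 0 (hi t - lo t + 1)) | t <- iota 0 n])%:Z.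
Proof.
move=> hn hP.
exists [seq q * n%:Z + t%:Z | t <- iota 0 n, q <- irange (lo t) (hi t)]; split.
- apply: allpairs_uniq_dep; first exact: iota_uniq.
    by move=> t _; exact: irange_uniq.
  move=> [t1 q1] [t2 q2] /allpairsPdep [t1' [q1' [h1 _ e1]]] /allpairsPdep [t2' [q2' [h2 _ e2]]] /= e.
  move: e1 e2; rewrite /Tagged => e1 e2.
  case: e1 => ? ?; case: e2 => ? ?; subst.
  move: h1 h2; rewrite !mem_iota !add0n => h1 h2.
  have [d1 m1] := divmod_nt q1' hn h1.
  have [d2 m2] := divmod_nt q2' hn h2.
  have eq : q1' = q2' by rewrite -d1 e d2.
  have et : t1' = t2' by rewrite -m1 e m2.
  by subst.
- move=> x; split.
    move=> /allpairsPdep [t [q [ht hq ->]]].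
    move: ht; rewrite mem_iota add0n => ht.
    have [d m] := divmod_nt q hn ht.
    by apply/hP; rewrite d m -mem_irange.
  move=> /hP hx; apply/allpairsPdep.
  have [e ht] := decomp x hn.
  exists (absz (x %% n%:Z)%Z), (x %/ n%:Z)%Z; split => //.
    by rewrite mem_iota add0n.
  by rewrite mem_irange.
- rewrite size_allpairs_dep; congr Posz; congr sumn; apply: eq_map => t.
  by rewrite size_irange.
Qed.

Lemma sumn_int (n : nat) (f : nat -> nat) :
  (sumn [seq f t | t <- iota 0 n])%:Z = \sum_(t < n) (f t)%:Z.
Proof.
rewrite sumnE big_map (big_morph Posz PoszD (erefl _)).
have -> : iota 0 n = index_iota 0 n by rewrite /index_iota subn0.
by rewrite big_mkord.
Qed.

Lemma absmax (c : int) : (absz (Num.max 0 (- c)))%:Z = (absz (Num.max 0 c))%:Z - c.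
Proof.
rewrite !max0E; case: (lerP 0 c) => h; case: (lerP 0 (-c)) => h'.
- have -> : c = 0 by lra.
  by rewrite oppr0.
- by rewrite [X in _ = X - _]gez0_abs // subrr.
- rewrite [X in X = _]gez0_abs ?oppr_ge0 ?ltW //.
by rewrite sub0r.
- lra.
Qed.

Section Spec.
Variables (m n : nat) (Hm : (0 < m)%N) (Hn : (0 < n)%N) (u : config m n).
Hypotheses (Hp : parking u) (Hs : sorted_conf u).

Definition sI : 'I_m := Ordinal (sink_lt Hm).

Lemma sinkE : sink n Hm = inl sI. Proof. by []. Qed.

Lemma is_sink_l (i : 'I_m) : is_sink (inl i : V m n) = (i == sI).
Proof. by rewrite /is_sink; apply/eqP/eqP => [h|->] //; apply: val_inj. Qed.

Lemma nsI (i : 'I_m) : (i != sI) = (i < m.-1)%N.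
Proof.
have := ltn_ord i; rewrite -(inj_eq val_inj) /=; case: m Hm i => // m' _ i /=; lia.
Qed.

Lemma u_nn (c : V m n) : ~~ is_sink c -> 0 <= u c.
Proof. by case: Hp => h _; exact: h. Qed.

Lemma ua_bnd (i : 'I_m) : i != sI -> 0 <= u (inl i) < n%:Z.
Proof.
move=> hi; have h0 : 0 <= u (inl i) by apply: u_nn; rewrite is_sink_l.
rewrite h0 /=.
case: Hp => _ /(_ [set (inl i : V m n)]).
case.
- by apply/set0Pn; exists (inl i); rewrite inE.
- by move=> c; rewrite inE => /eqP ->; rewrite is_sink_l.
move=> x [hx]; rewrite /DeltaSet big_set1 /Delta.
case: x hx => [i'|j] hx /=.
  case: (eqVneq (inl i' : V m n) (inl i)) => [[->]|ne] /=.
    by rewrite subr0; lra.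
  have := u_nn hx; rewrite /= subr0; lra.
have := u_nn hx; rewrite /=; lra.
Qed.

Lemma ub_bnd (j : 'I_n) : 0 <= u (inr j) < m%:Z.
Proof.
have h0 : 0 <= u (inr j) by apply: u_nn.
rewrite h0 /=.
case: Hp => _ /(_ [set (inr j : V m n)]).
case.
- by apply/set0Pn; exists (inr j); rewrite inE.
- by move=> c; rewrite inE => /eqP ->.
move=> x [hx]; rewrite /DeltaSet big_set1 /Delta.
case: x hx => [i|j'] hx /=.
  have := u_nn hx; rewrite /=; lra.
case: (eqVneq (inr j' : V m n) (inr j)) => [[->]|ne] /=.
  by rewrite subr0; lra.
have := u_nn hx; rewrite /= subr0; lra.
Qed.


Lemma Gb_thr (t : 'I_n) (X : int) :
  (n%:Z - t%:Z <= Gb u X) = (m%:Z - u (inr t) <= X).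
Proof.
have ht := ltn_ord t.
have mp := m_pos Hm.
apply/idP/idP.
  move=> h; rewrite leNgt; apply/negP => hX; move: h; apply/negP; rewrite -ltNge.
  have e := sum_ind_ge ht.
  have : Gb u X <= (n - t.+1)%:Z.
    rewrite -e; apply: ler_sum => j _.
    have /andP[j0 j1] := ub_bnd j.
    case: ifP => hj.
      have /andP[t0 t1] := ub_bnd t.
      rewrite -(ltzD1 _ 1) divz_lt //; lra.
    rewrite -(ltzD1 _ 0) add0r divz_lt // mul1r.
    have : u (inr j) <= u (inr t) by apply: Hs.2; lia.
    lra.
  move=> h; apply: (le_lt_trans h); lia.
move=> hX.
have e := sum_ind_ge (ltnW ht).
rewrite subzn ?(ltnW ht) // -e; apply: ler_sum => j _.
have /andP[j0 j1] := ub_bnd j.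
have /andP[t0 t1] := ub_bnd t.
case: ifP => hj.
  rewrite lez_divRL // mul1r.
  have : u (inr t) <= u (inr j) by apply: Hs.2.
  lra.
rewrite divz_ge0 //; lra.
Qed.


Definition cardt (t : nat) : nat :=
  #|[pred i : 'I_m | (i < m.-1)%N && (u (inl i) + 1 <= t%:Z)]|.

Lemma cardtE (t : nat) :
  (cardt t)%:Z = \sum_(i | i != sI) (if u (inl i) + 1 <= t%:Z then 1 else 0).
Proof.
rewrite /cardt -sum1_card (big_morph Posz PoszD (erefl _)).
rewrite big_mkcond [RHS]big_mkcond /=; apply: eq_bigr => i _.
by rewrite !inE -nsI; case: (i != sI); case: (_ <= _).
Qed.

Lemma sum_nsI (c : int) : \sum_(i | i != sI) c = c * (m.-1)%:Z.
Proof.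
rewrite sumr_const.
have -> : #|[pred i : 'I_m | i != sI]| = m.-1 by rewrite (cardC1 sI) card_ord.
by rewrite -[(m.-1)%:Z]natz mulr_natr.
Qed.

Lemma rvecE (j : 'I_n) : rvec u j = u (inr j) + 1 - (cardt j)%:Z.
Proof. by rewrite /rvec valK. Qed.

Lemma Fa_val (t : 'I_n) :
  Fa u (n%:Z - t%:Z) = m%:Z - (cardt t)%:Z + ((u (inl sI) - t%:Z) %/ n%:Z)%Z.
Proof.
have np := n_pos Hn.
have ht := ltn_ord t.
rewrite /Fa (bigD1 sI) //= cardtE.
have -> : u (inl sI) + (n%:Z - t%:Z) = (u (inl sI) - t%:Z) + 1 * n%:Z by ring.
rewrite divz_addn ?(lt0r_neq0 np) //.
rewrite (eq_bigr (fun i => 1 - (if u (inl i) + 1 <= t%:Z then 1 else 0))); last first.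
  move=> i hi; have /andP[a0 a1] := ua_bnd hi.
  case: ifP => h.
    rewrite subrr; apply: divz_uniq => //; move: (u (inl i)) a0 a1 h => x a0 a1 h; lia.
  rewrite subr0; apply: divz_uniq => //; move: (u (inl i)) a0 a1 h => x a0 a1 h; lia.
rewrite sumrB sum_nsI.
have hm : (m.-1)%:Z = m%:Z - 1 by case: (m) Hm => // m' _; rewrite /= -addn1 PoszD; ring.
rewrite hm; ring.
Qed.


Definition ccol (t : nat) : int := ((u (inl sI) - t%:Z) %/ n%:Z)%Z + rvec u t.

Lemma count_int_range (K : nat) (lo hi : int) :
  1 <= lo -> hi <= K%:Z ->
  count (fun x : nat => (lo <= x%:Z - K%:Z) && (x%:Z - K%:Z <= hi)) (iota 0 (2 * K).+1)
  = absz (Num.max 0 (hi - lo + 1)).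
Proof.
move=> hlo hhi.
case: (lerP lo hi) => hlh.
  have -> : Num.max 0 (hi - lo + 1) = hi - lo + 1 by apply/max_idPr; lra.
  have -> : absz (hi - lo + 1) = subn (absz (hi + K%:Z + 1)) (absz (lo + K%:Z)) by lia.
  rewrite -(@count_range (absz (lo + K%:Z)) (absz (hi + K%:Z + 1)) (2 * K).+1); [|lia|lia].
  by apply: eq_in_count => x _ /=; apply/idP/idP; lia.
rewrite (eq_in_count (a2 := pred0)); last by move=> x _ /=; apply/negbTE; lia.
rewrite count_pred0.
have -> : Num.max 0 (hi - lo + 1) = 0 by apply/max_idPl; lia.
by [].
Qed.

Lemma col_count (t : 'I_n) K : BnZ u <= K%:Z ->
  count (fun x : nat => inR u (x%:Z - K%:Z, n%:Z - t%:Z)) (iota 0 (2 * K).+1)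
  = absz (Num.max 0 (ccol t)).
Proof.
move=> hK.
have ht := ltn_ord t.
have e : forall X, inR u (X, n%:Z - t%:Z) = (m%:Z - u (inr t) <= X) && (X <= Fa u (n%:Z - t%:Z)).
  move=> X; rewrite /inR /= Gb_thr.
  have -> : (1 <= n%:Z - t%:Z) = true by apply/idP; lia.
  have -> : (n%:Z - t%:Z <= n%:Z) = true by apply/idP; lia.
  by rewrite /= andbC.
have hc : ccol t = Fa u (n%:Z - t%:Z) - (m%:Z - u (inr t)) + 1.
  by rewrite Fa_val /ccol rvecE; ring.
rewrite hc.
under eq_count => x do rewrite e.
have /andP[t0 t1] := ub_bnd t.
have t1' : 1 <= m%:Z - u (inr t) by rewrite -lezD1 in t1; lra.
case: (lerP (m%:Z - u (inr t)) (Fa u (n%:Z - t%:Z))) => h.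
  have hb : inR u (Fa u (n%:Z - t%:Z), n%:Z - t%:Z) by rewrite e h lexx.
  have /andP[_ hF] := inR_bound Hm Hn hb; rewrite /= in hF.
  apply: count_int_range => //; lra.
have hBm : m%:Z <= BnZ u.
  rewrite /BnZ; have : (0:int) <= \sum_(c : V m n) `|u c| by apply: sumr_ge0.
  have : m%:Z <= (m * n)%:Z by rewrite lez_nat leq_pmulr.
  lra.
apply: count_int_range => //; lra.
Qed.


Definition Nexp : nat := sumn [seq absz (Num.max 0 (ccol t)) | t <- iota 0 n].

Lemma Acnt_u K : BnZ u <= K%:Z -> Acnt K u = Nexp.
Proof.
move=> hK; rewrite /Acnt /box count_flatten -map_comp /Nexp; congr sumn.
apply/eq_in_map => t; rewrite mem_iota add0n /= => ht.
rewrite count_map.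
exact: (col_count (Ordinal ht) hK).
Qed.

Lemma rank_u : rank u = Nexp%:Z - 1.
Proof.
apply: (@rank_val m n Hm Hn u Nexp (absz (BnZ u + Nexp%:Z))).
  have : 0 <= BnZ u.
    rewrite /BnZ; have : (0:int) <= \sum_(c : V m n) `|u c| by apply: sumr_ge0.
    have : (0:int) <= (m * n)%:Z by [].
    lra.
  move=> h; have h2 : (0:int) <= Nexp%:Z by []; rewrite gez0_abs; lra.
apply: Acnt_u.
have : 0 <= BnZ u.
  rewrite /BnZ; have : (0:int) <= \sum_(c : V m n) `|u c| by apply: sumr_ge0.
  have : (0:int) <= (m * n)%:Z by [].
  lra.
move=> h; have h2 : (0:int) <= Nexp%:Z by []; rewrite gez0_abs; lra.
Qed.


Lemma sum_cardt : \sum_(t < n) (cardt t)%:Z = \sum_(i | i != sI) (n%:Z - 1 - u (inl i)).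
Proof.
under eq_bigr => t _ do rewrite cardtE.
rewrite exchange_big /=; apply: eq_bigr => i hi.
have /andP[a0 a1] := ua_bnd hi.
have hle : (absz (u (inl i) + 1)%R <= n)%N by move: (u (inl i)) a0 a1 => x a0 a1; lia.
rewrite (eq_bigr (fun t : 'I_n => if (absz (u (inl i) + 1)%R <= t)%N then 1 else 0)); last first.
  move=> t _; congr (if _ then _ else _).
  move: (u (inl i)) a0 => x a0; apply/idP/idP; lia.
rewrite sum_ind_ge //; move: (u (inl i)) a0 hle => x a0 hle; lia.
Qed.

Lemma sum_ccol : \sum_(t < n) ccol t = degree u + 1 - ((m - 1) * (n - 1))%N%:Z.
Proof.
rewrite /ccol big_split /= hermite //.
under eq_bigr => t _ do rewrite rvecE.
rewrite !big_split /= sumrN sum_cardt sumrB sum_nsI sumr_const card_ord.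
have ed : \sum_(i < m) u (inl i) = u (inl sI) + \sum_(i | i != sI) u (inl i) by rewrite (bigD1 sI).
rewrite /degree sumV ed.
have hm : (m.-1)%:Z = m%:Z - 1 by case: (m) Hm => // m' _; rewrite /= -addn1 PoszD; ring.
have hmn : ((m - 1) * (n - 1))%N%:Z = (m%:Z - 1) * (n%:Z - 1).
  by rewrite PoszM !subzn.
rewrite hm hmn natz.
ring.
Qed.


Lemma counts_y : counts (fun x => x <= u (inl sI) /\ is_right u x) Nexp%:Z.
Proof.
have -> : Nexp = sumn [seq absz (Num.max 0 (((u (inl sI) - t%:Z) %/ n%:Z)%Z - (1 - rvec u t) + 1)) | t <- iota 0 n].
  by rewrite /Nexp; congr sumn; apply: eq_map => t; rewrite /ccol; congr (absz (Num.max 0 _)); ring.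
apply: counts_cols => // x.
have [e ht] := decomp x Hn.
have np := n_pos Hn.
move: e ht; set t := absz (x %% n%:Z)%Z; set q := (x %/ n%:Z)%Z => e ht.
rewrite /is_right -/t -/q lez_divRL //.
split.
  by move=> [h1 h2]; apply/andP; split; lra.
by move=> /andP[h1 h2]; split; lra.
Qed.

Lemma counts_x : counts (fun x => u (inl sI) < x /\ ~~ is_right u x)
  (sumn [seq absz (Num.max 0 (- ccol t)) | t <- iota 0 n])%:Z.
Proof.
have -> : [seq absz (Num.max 0 (- ccol t)) | t <- iota 0 n] = [seq absz (Num.max 0 (- rvec u t - (((u (inl sI) - t%:Z) %/ n%:Z)%Z + 1) + 1)) | t <- iota 0 n].
  by apply: eq_map => t; rewrite /ccol; congr (absz (Num.max 0 _)); ring.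
apply: counts_cols => // x.
have [e ht] := decomp x Hn.
have np := n_pos Hn.
move: e ht; set t := absz (x %% n%:Z)%Z; set q := (x %/ n%:Z)%Z => e ht.
rewrite /is_right -/t -/q -ltNge.
have h1 : (((u (inl sI) - t%:Z) %/ n%:Z)%Z + 1 <= q) = (u (inl sI) < x).
  by rewrite lezD1 divz_lt // e; apply/idP/idP; lra.
have h2 : (q + rvec u t < 1) = (q <= - rvec u t).
  by rewrite -[1]add0r ltzD1; apply/idP/idP; lra.
rewrite -h1 h2; split; first by case=> -> ->.
by move=> /andP[-> ->].
Qed.


End Spec.


Unset Implicit Arguments.

Theorem lemma13p1 (m n : nat) (Hm : (0 < m)%N) (Hn : (0 < n)%N) (u : config m n) :
  parking u -> sorted_conf u ->
  counts (fun sigma => u (sink n Hm) < sigma /\ ~~ is_right u sigma)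
         (((m - 1) * (n - 1))%N%:Z + rank u - degree u)
  /\ counts (fun sigma => sigma <= u (sink n Hm) /\ is_right u sigma) (rank u + 1).
Proof.
move=> Hp Hs.
have hr := rank_u Hm Hn Hp Hs.
rewrite sinkE hr; split; last by rewrite subrK; exact: counts_y.
have e : (sumn [seq absz (Num.max 0 (- ccol Hm u t)) | t <- iota 0 n])%:Z =
         ((m - 1) * (n - 1))%N%:Z + ((Nexp Hm u)%:Z - 1) - degree u.
  rewrite sumn_int /Nexp sumn_int.
  under eq_bigr => t _ do rewrite absmax.
  rewrite sumrB (sum_ccol Hm Hn Hp); ring.
rewrite -e; exact: counts_x.
Qed.
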